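(* Let $(X,p)$ and $(Y,d)$ be metric spaces with $(Y,d)$ separable, and let $F: X \Rightarrow Y$ be a (total) multi-valued function. Let $P \subseteq X$ be the set of points $x \in X$ at which $F$ is continuous. (a) If $F(x)$ is compact for every $x \in X$, then $P$ is a $\Pi^0_2$ (i.e. $G_\delta$) subset of $X$. (b) If $Y$ is exhaustible by compact sets and $F(x)$ is closed for every $x \in X$, then $P$ is a $\Sigma^0_3$ subset of $X$.
   Context: A multi-valued function $F: X \Rightarrow Y$ assigns to each $x\in X$ a set $F(x)\subseteq Y$; it is identified with its graph $\{(x,y): y \in F(x)\}\subseteq X\times Y$, and all multi-valued functions are assumed total, i.e. $F(x)\neq\emptyset$ for all $x$. $F$ is continuous at $x$ if there is some $y \in F(x)$ such that for every $\varepsilon>0$ there is $\delta>0$ such that for every $x' \in B_p(x,\delta)$ there is $y' \in F(x')$ with $d(y,y')<\varepsilon$. A space $Y$ is exhaustible by compact sets if there are compact sets $K_n \subseteq Y$ ($n\in\omega$) with $K_n$ contained in the interior of $K_{n+1}$ for all $n$ and $Y=\bigcup_n K_n$. Borel hierarchy: $\Sigma^0_1$ = open sets; $\Sigma^0_{n+1}$ = countable unions $\bigcup_i A_i$ where each $X\setminus A_i\in\Sigma^0_{k_i}$ for some $k_i\le n$; $\Pi^0_n$ = complements of $\Sigma^0_n$ sets. Thus $\Pi^0_2$ = $G_\delta$ and $\Sigma^0_3$ = countable unions of $G_\delta$ sets. *)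

(* Defs.v *)
From HB Require Import structures.
From mathcomp Require Import all_boot all_order all_algebra.
From mathcomp Require Import all_classical all_reals all_analysis.
From mathcomp Require Import borel_hierarchy.
Set Implicit Arguments. Unset Strict Implicit. Unset Printing Implicit Defensive.
Import Order.TTheory GRing.Theory Num.Theory.
Import numFieldNormedType.Exports.
Local Open Scope classical_set_scope.
Local Open Scope ring_scope.

Definition separable_sp (T : topologicalType) : Prop :=
  exists D : set T, countable D /\ dense D.

Definition exhaustible_by_compacts (T : topologicalType) : Prop :=
  exists K : (set T)^nat,
    (forall n, compact (K n)) /\
    (forall n, K n `<=` interior (K n.+1)) /\
    \bigcup_n K n = setT.

Definition mv_total (X Y : Type) (F : X -> set Y) : Prop :=
  forall x, F x !=set0.

(* Continuity of a multi-valued function at x (metric definition, with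
   B_p(x,delta) = ball x delta and d(y,y') < eps as ball y eps y'). *)
Definition mv_continuous_at (R : realType) (X Y : pseudoMetricType R)
  (F : X -> set Y) (x : X) : Prop :=
  exists2 y, F x y &
    forall eps : R, 0 < eps -> exists2 delta : R, 0 < delta &
      forall x', ball x delta x' -> exists2 y', F x' y' & ball y eps y'.

Definition mv_continuity_points (R : realType) (X Y : pseudoMetricType R)
  (F : X -> set Y) : set X := [set x | mv_continuous_at F x].

Definition Sigma03 (T : topologicalType) (S : set T) : Prop :=
  exists2 A : (set T)^nat, (forall i, Gdelta (A i)) & S = \bigcup_i A i.

(* Main.v *)
Require Import Defs.
From HB Require Import structures.
From mathcomp Require Import all_boot all_order all_algebra.
From mathcomp Require Import all_classical all_reals all_analysis.
From mathcomp Require Import borel_hierarchy.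
Import Order.TTheory GRing.Theory Num.Theory.
From mathcomp Require Import archimedean.
Import Num.Def Num.Theory.
Import numFieldNormedType.Exports.
Local Open Scope classical_set_scope.
Local Open Scope ring_scope.

Lemma small_inv (R : realType) (e : R) : 0 < e ->
  exists n : nat, n.+1%:R^-1 + n.+1%:R^-1 <= e.
Proof.
move=> e0; pose eps := e / 2.
have eps0 : 0 < eps by rewrite divr_gt0.
have [n n1e] : exists n : nat, n.+1%:R^-1 < eps.
  exists (truncn eps^-1).
  by rewrite -ltf_pV2 ?(posrE,divr_gt0)// invrK truncnS_gt.
exists n; rewrite [e](splitr e); apply: lerD; exact: ltW.
Qed.

Section Aux.
Context (R : realType) (X Y : pseudoMetricType R) (F : X -> set Y).

Definition OO (U : set Y) : set X := interior [set x' | F x' `&` U !=set0].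

Lemma OO_open U : open (OO U).
Proof. exact: open_interior. Qed.

Lemma OO_mono {U V} : U `<=` V -> OO U `<=` OO V.
Proof.
move=> UV; apply: interiorS => x' [y [Fy Uy]]; exists y; split=> //; exact: UV.
Qed.

Lemma OO_meet {U x} : OO U x -> F x `&` U !=set0.
Proof. exact: nbhs_singleton. Qed.

Lemma cont_iff x : closed (F x) ->
  mv_continuous_at F x <-> exists y, forall e, 0 < e -> OO (ball y e) x.
Proof.
move=> cF; split.
  move=> [y Fy H]; exists y => e e0; have [d d0 Hd] := H e e0.
  apply/nbhs_ballP; exists d => // x' /Hd [y' Fy' By']; exists y'; split=> //.
move=> [y Hy]; exists y.
  rewrite (closure_id (F x)).1 // => B /nbhs_ballP [e e0 sB].
  have [z [Fz Bz]] := OO_meet (Hy e e0); exists z; split=> //; exact: sB.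
move=> e e0; have /nbhs_ballP [d d0 Hd] := Hy e e0; exists d => // x' /Hd.
by move=> [y' [Fy' By']]; exists y'.
Qed.

Lemma OO_shift x y e : OO (ball y e) x ->
  exists z, F x z /\ OO (ball z (e + e)) x.
Proof.
move=> H; have [z [Fz Bz]] := OO_meet H; exists z; split=> //.
apply: OO_mono H => w Bw; apply: ball_triangle Bw; exact: ball_sym.
Qed.

Lemma cluster_lem (K : set Y) x : compact K ->
  (forall e, 0 < e -> exists y, K y /\ OO (ball y e) x) ->
  exists y, forall e, 0 < e -> OO (ball y e) x.
Proof.
move=> cK H.
pose S := fun e : R => [set y | K y /\ OO (ball y e) x].
pose G := filter_from [set e : R | 0 < e] S.
have GF : Filter G.
  apply: filter_from_filter; first by exists 1; rewrite /= ltr01.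
  move=> i j i0 j0; exists (Order.min i j); first by rewrite /= lt_min i0 j0.
  move=> y [Ky Oy]; split; split=> //; apply: OO_mono Oy; apply: le_ball.
    by rewrite ge_min lexx.
  by rewrite ge_min lexx orbT.
have GP : ProperFilter G.
  apply: filter_from_proper => // e e0; have [y Hy] := H e e0; by exists y.
have GK : G K by exists 1; [rewrite /= ltr01 | move=> y []].
have [y [Ky Cy]] := cK G GP GK.
exists y => e e0.
have e20 : 0 < e / 2 by rewrite divr_gt0.
have GS : G (S (e/2)) by exists (e/2).
have [z [[Kz Oz] Bz]] := Cy (S (e/2)) (ball y (e/2)) GS (nbhsx_ballx _ _ e20).
apply: OO_mono Oz => w Bw; rewrite [e](splitr e).
exact: ball_triangle Bz Bw.
Qed.

End Aux.
Arguments OO_mono {R X Y F U V}.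
Arguments OO_meet {R X Y F U x}.
Arguments cont_iff {R X Y F x}.
Arguments OO_shift {R X Y F x y e}.
Arguments cluster_lem {R X Y F K x}.
Arguments OO_open {R X Y F}.

Theorem theorem2p1 (R : realType) (X Y : pseudoMetricType R) (F : X -> set Y) :
  hausdorff_space X -> hausdorff_space Y ->
  separable_sp Y -> mv_total F ->
  ((forall x, compact (F x)) -> Gdelta (mv_continuity_points F)) /\
  (exhaustible_by_compacts Y -> (forall x, closed (F x)) ->
     Sigma03 (mv_continuity_points F)).
Proof.
move=> _ hY _ _; split.
  move=> cF.
  have clF : forall x, closed (F x) by move=> x; exact: compact_closed.
  exists (fun n => \bigcup_y @OO _ _ _ F (ball y n.+1%:R^-1)).
    by move=> n; apply: bigcup_open => y _; exact: OO_open.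
  apply/seteqP; split => x.
    rewrite /mv_continuity_points /= (cont_iff (clF x)) => -[y Hy] n _.
    by exists y => //; apply: Hy; rewrite invr_gt0 ltr0n.
  move=> Hx; rewrite /mv_continuity_points /= (cont_iff (clF x)).
  apply: (cluster_lem (cF x)) => e e0.
  have [n Hn] := small_inv _ _ e0.
  have [y _ Oy] := Hx n I.
  have [z [Fz Oz]] := OO_shift Oy; exists z; split=> //.
  by apply: OO_mono Oz; apply: le_ball.
move=> [K [cK [KK KT]]] clF.
exists (fun m => \bigcap_n \bigcup_y @OO _ _ _ F (ball y n.+1%:R^-1 `&` interior (K m))).
  move=> m; exists (fun n => \bigcup_y @OO _ _ _ F (ball y n.+1%:R^-1 `&` interior (K m))) => //.
  by move=> n; apply: bigcup_open => y _; exact: OO_open.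
apply/seteqP; split => x.
  rewrite /mv_continuity_points /= (cont_iff (clF x)) => -[y Hy].
  have : (\bigcup_n K n) y by rewrite KT.
  move=> [m _ Kmy]; exists m.+1 => // n _.
  have /nbhs_ballP [r r0 Br] : nbhs y (interior (K m.+1)).
    exact/nbhs_interior/KK.
  have rn0 : 0 < n.+1%:R^-1 :> R by rewrite invr_gt0 ltr0n.
  exists y => //; apply: OO_mono (Hy (Order.min r n.+1%:R^-1) _).
    move=> w Bw; split.
      by apply: le_ball Bw; rewrite ge_min lexx orbT.
    by apply: Br; apply: le_ball Bw; rewrite ge_min lexx.
  by rewrite lt_min r0 rn0.
move=> [m _ Hx]; rewrite /mv_continuity_points /= (cont_iff (clF x)).
apply: (cluster_lem (cK m)) => e e0.
have [n Hn] := small_inv _ _ e0.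
have [y _ Oy] := Hx n I.
have [z [Fz [Bz Iz]]] := OO_meet Oy.
exists z; split; first exact: interior_subset.
apply: OO_mono Oy => w [Bw _].
have Bzy : ball z n.+1%:R^-1 y by exact: ball_sym.
exact: (le_ball Hn (ball_triangle Bzy Bw)).
Qed.
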